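(* Let $d,K,n$ be positive integers with $K\ge 2$. With $\mathcal L_0$ and $\mathcal{WH}^-$ as defined below, there exists $\tau_0>0$ such that for every $\tau\in(0,\tau_0)$, $$\operatorname{argmin}_{(\mathbf W,\mathbf H)\in\mathrm{OB}(d,K)\times\mathrm{OB}(d,nK)}\mathcal L_0(\mathbf W,\mathbf H,\tau)\subseteq\mathcal{WH}^-.$$
   Context: $\mathrm{OB}(d,m)$ is the set of real $d\times m$ matrices with unit-norm columns; $\mathbf W$ has columns $\mathbf w_k$ ($k\in[K]$), $\mathbf H$ has columns $\mathbf h_{k,i}$ ($k\in[K],i\in[n]$). $\mathbf y_k$ is the $k$-th standard basis vector of $\mathbb R^K$; $\mathcal L_{\mathrm{CE}}(\mathbf z,\mathbf y_k,\tau)=-\log\big(\exp(z_k/\tau)/\sum_{j}\exp(z_j/\tau)\big)$. $\mathcal L_0(\mathbf W,\mathbf H,\tau)=\tau\log\sum_{i=1}^n\sum_{k=1}^K\mathcal L_{\mathrm{CE}}(\mathbf W^\top\mathbf h_{k,i},\mathbf y_k,\tau)$. $\mathcal{WH}^-=\{(\mathbf W,\mathbf H)\in\mathrm{OB}(d,K)\times\mathrm{OB}(d,nK):(\mathbf w_{k'}-\mathbf w_k)^\top\mathbf h_{k,i}\le0\ \forall i,k,\ k'\ne k\}$. *)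

(* Defs.v *)
From mathcomp Require Import all_boot all_order all_algebra.
From mathcomp Require Import all_classical all_reals all_analysis.
Set Implicit Arguments. Unset Strict Implicit. Unset Printing Implicit Defensive.
Import Order.TTheory GRing.Theory Num.Theory.
Local Open Scope ring_scope.

Section Defs.
Variable R : realType.

Definition isOB (d m : nat) (A : 'M[R]_(d, m)) : Prop :=
  forall j : 'I_m, \sum_(l < d) (A l j) ^+ 2 = 1.

(* Column h_{k,i} of H in OB(d, nK): columns indexed by pairs (k,i), k < K, i < n,
   via the bijection mxvec_index : 'I_K -> 'I_n -> 'I_(K*n). *)
Definition hcol (d K n : nat) (H : 'M[R]_(d, K * n)) (k : 'I_K) (i : 'I_n) : 'cV[R]_d :=
  col (mxvec_index k i) H.

(* Cross-entropy with temperature tau; the label y_k is the k-th standard basis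
   vector, so z^T y_k = z_k. *)
Definition LCE (K : nat) (z : 'cV[R]_K) (k : 'I_K) (tau : R) : R :=
  - ln (expR (z k 0 / tau) / \sum_(j < K) expR (z j 0 / tau)).

Definition L0 (d K n : nat) (W : 'M[R]_(d, K)) (H : 'M[R]_(d, K * n)) (tau : R) : R :=
  tau * ln (\sum_(i < n) \sum_(k < K) LCE (W^T *m hcol H k i) k tau).

Definition WHminus (d K n : nat) (W : 'M[R]_(d, K)) (H : 'M[R]_(d, K * n)) : Prop :=
  isOB W /\ isOB H /\
  forall (i : 'I_n) (k k' : 'I_K), k' != k ->
    ((col k' W - col k W)^T *m hcol H k i) 0 0 <= 0.

Definition isArgminL0 (d K n : nat) (tau : R) (W : 'M[R]_(d, K)) (H : 'M[R]_(d, K * n)) : Prop :=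
  isOB W /\ isOB H /\
  forall (W' : 'M[R]_(d, K)) (H' : 'M[R]_(d, K * n)),
    isOB W' -> isOB H' -> L0 W H tau <= L0 W' H' tau.

End Defs.

(* Main.v *)
Require Import Defs.
From mathcomp Require Import all_boot all_order all_algebra.
From mathcomp Require Import all_classical all_reals all_analysis.
From mathcomp Require Import ring lra.
Import Order.TTheory GRing.Theory Num.Theory.
Set Implicit Arguments. Unset Strict Implicit.
Local Open Scope ring_scope.

Section H.
Variable R : realType.

Definition FF (K : nat) (z : 'cV[R]_K) (k : 'I_K) (tau : R) : R :=
  \sum_(j < K) expR ((z j 0 - z k 0) / tau).

Lemma LCE_eq K (z : 'cV[R]_K) k tau : LCE z k tau = ln (FF z k tau).
Proof.
rewrite /LCE /FF.
have Sp : 0 < \sum_(j < K) expR (z j 0 / tau).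
  rewrite (bigD1 k) //= ltr_wpDr ?expR_gt0 //.
  by apply: sumr_ge0 => j _; apply: expR_ge0.
have -> : expR (z k 0 / tau) / \sum_(j < K) expR (z j 0 / tau) =
   (\sum_(j < K) expR (z j 0 / tau) / expR (z k 0 / tau))^-1.
  by rewrite -mulr_suml invf_div.
rewrite lnV ?opprK; last by rewrite posrE -mulr_suml divr_gt0 // expR_gt0.
congr ln; apply: eq_bigr => j _.
by rewrite -expRB mulrBl.
Qed.

Lemma FF_ge1 K (z : 'cV[R]_K) k tau : 1 <= FF z k tau.
Proof.
rewrite /FF (bigD1 k) //= subrr mul0r expR0 lerDl.
by apply: sumr_ge0 => j _; apply: expR_ge0.
Qed.

Lemma FF_ge K (z : 'cV[R]_K) k k' tau : k' != k ->
  1 + expR ((z k' 0 - z k 0) / tau) <= FF z k tau.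
Proof.
move=> nk; rewrite /FF (bigD1 k) //= subrr mul0r expR0 lerD2l.
rewrite (bigD1 k') //= ?nk // lerDl.
by apply: sumr_ge0 => j _; apply: expR_ge0.
Qed.

Lemma LCE_ge0 K (z : 'cV[R]_K) k tau : 0 <= LCE z k tau.
Proof. by rewrite LCE_eq ln_ge0 // FF_ge1. Qed.

Lemma LCE_gt0 K (z : 'cV[R]_K) k k' tau : k' != k -> 0 < LCE z k tau.
Proof.
move=> nk; rewrite LCE_eq ln_gt0 //.
apply: lt_le_trans (FF_ge z tau nk); by rewrite ltrDl expR_gt0.
Qed.

Lemma LCE_gt_ln2 K (z : 'cV[R]_K) k k' tau : k' != k -> 0 < tau ->
  z k 0 < z k' 0 -> ln 2 < LCE z k tau.
Proof.
move=> nk tp lt; rewrite LCE_eq.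
have F1 := FF_ge z tau nk.
have e1 : 1 < expR ((z k' 0 - z k 0) / tau).
  by rewrite expR_gt1 divr_gt0 // subr_gt0.
rewrite ltr_ln ?posrE //; first lra.
apply: lt_le_trans F1; lra.
Qed.

Lemma LCE_ge_c K (z : 'cV[R]_K) k k' tau c : k' != k -> 0 < tau ->
  c <= z k' 0 - z k 0 -> c / tau <= LCE z k tau.
Proof.
move=> nk tp le; rewrite LCE_eq.
have F1 := FF_ge z tau nk.
have e1 : expR (c / tau) <= expR ((z k' 0 - z k 0) / tau).
  by rewrite ler_expR ler_pM2r ?invr_gt0.
rewrite -{1}(expRK (c / tau)) ler_ln ?posrE ?expR_gt0 //; last first.
  apply: lt_le_trans F1; have := expR_gt0 ((z k' 0 - z k 0) / tau); lra.
have := expR_gt0 ((z k' 0 - z k 0) / tau); lra.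
Qed.

Lemma LCE_le_K K (z : 'cV[R]_K) k tau : 0 < tau ->
  (forall j, z j 0 <= z k 0) -> LCE z k tau <= K%:R.
Proof.
move=> tp hz; rewrite LCE_eq.
have h1 : FF z k tau <= K%:R.
  rewrite /FF -[K in K%:R]card_ord -sumr_const; apply: ler_sum => j _.
  by rewrite expR_le1 pmulr_lle0 ?invr_gt0 // subr_le0.
have h2 := ln_sublinear (lt_le_trans ltr01 (FF_ge1 z k tau)).
lra.
Qed.

Lemma LCE_le_c K (z : 'cV[R]_K) k tau c : 0 < tau -> 0 < c ->
  (forall j, j != k -> z j 0 - z k 0 <= - c) -> LCE z k tau <= K%:R * (tau / c).
Proof.
move=> tp cp hz; rewrite LCE_eq.
have eb : expR (- (c / tau)) <= tau / c.
  rewrite expRN -[tau / c]invf_div lef_pV2 ?posrE ?divr_gt0 ?expR_gt0 //.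
  have := expR_ge1Dx (c / tau); have : 0 < c / tau by rewrite divr_gt0.
  lra.
have h1 : FF z k tau - 1 <= K%:R * (tau / c).
  rewrite /FF (bigD1 k) //= subrr mul0r expR0 addrC addrK.
  apply: (@le_trans _ _ (\sum_(j < K | j != k) (tau / c))).
    apply: ler_sum => j jk; apply: le_trans eb.
    by rewrite ler_expR -mulNr ler_pM2r ?invr_gt0 //; apply: hz.
  rewrite big_mkcond /= mulr_natl -[K in _ *+ K]card_ord -sumr_const.
  apply: ler_sum => j _; case: ifP => // _.
  by apply: ltW; rewrite divr_gt0.
have F1 := FF_ge1 z k tau.
have := @le_ln1Dx R (FF z k tau - 1).
rewrite addrCA subrr addr0 => h; have := h ltac:(lra).
lra.
Qed.

Lemma zdiff d K (W : 'M[R]_(d, K)) (h : 'cV[R]_d) k k' :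
  ((col k' W - col k W)^T *m h) 0 0 = (W^T *m h) k' 0 - (W^T *m h) k 0.
Proof.
rewrite !mxE -sumrB; apply: eq_bigr => l _; by rewrite !mxE mulrBl.
Qed.

Lemma sum_ge_term n K (F : 'I_n -> 'I_K -> R) i k :
  (forall i k, 0 <= F i k) -> F i k <= \sum_(i < n) \sum_(k < K) F i k.
Proof.
move=> h; rewrite (bigD1 i) //= (bigD1 k) //= -addrA lerDl.
apply: addr_ge0; first by apply: sumr_ge0.
by apply: sumr_ge0 => j _; apply: sumr_ge0.
Qed.

Definition SS d K n (W : 'M[R]_(d, K)) (H : 'M[R]_(d, K * n)) tau :=
  \sum_(i < n) \sum_(k < K) LCE (W^T *m hcol H k i) k tau.

Lemma key d K n tau (W W' : 'M[R]_(d, K)) (H H' : 'M[R]_(d, K * n)) i k k' B :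
  0 < tau -> k' != k -> isArgminL0 tau W H -> isOB W' -> isOB H' ->
  SS W' H' tau <= B -> B < LCE (W^T *m hcol H k i) k tau -> False.
Proof.
move=> tp nk [_ [_ hm]] ow oh hB hL.
have := hm W' H' ow oh; rewrite /L0 ler_pM2l // -/(SS W H tau) -/(SS W' H' tau).
have S1 : LCE (W^T *m hcol H k i) k tau <= SS W H tau.
  by apply: (@sum_ge_term _ _ (fun i k => LCE (W^T *m hcol H k i) k tau) i k) => *; apply: LCE_ge0.
have S2 : LCE (W'^T *m hcol H' k i) k tau <= SS W' H' tau.
  by apply: (@sum_ge_term _ _ (fun i k => LCE (W'^T *m hcol H' k i) k tau) i k) => *; apply: LCE_ge0.
have S3 := LCE_gt0 (W'^T *m hcol H' k i) tau nk.
rewrite ler_ln ?posrE; lra.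
Qed.

Lemma SS_le d K n (W : 'M[R]_(d, K)) (H : 'M[R]_(d, K * n)) tau B :
  (forall i k, LCE (W^T *m hcol H k i) k tau <= B) -> SS W H tau <= (n * K)%:R * B.
Proof.
move=> h; rewrite /SS natrM -mulrA mulr_natl -[n in _ *+ n]card_ord -sumr_const.
apply: ler_sum => i _; rewrite mulr_natl -[K in _ *+ K]card_ord -sumr_const.
by apply: ler_sum => k _.
Qed.


Definition p1 (t : R) : R := (1 - t ^+ 2) / (1 + t ^+ 2).
Definition p2 (t : R) : R := 2 * t / (1 + t ^+ 2).

Lemma den_gt0 (t : R) : 0 < 1 + t ^+ 2.
Proof. by apply: ltr_wpDr; [apply: sqr_ge0 | apply: ltr01]. Qed.

Lemma p_norm t : p1 t ^+ 2 + p2 t ^+ 2 = 1.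
Proof.
have := den_gt0 t => h; rewrite /p1 /p2; field; lra.
Qed.

Lemma p_dot s t : p1 s * p1 t + p2 s * p2 t - 1 =
  - (2 * (s - t) ^+ 2 / ((1 + s ^+ 2) * (1 + t ^+ 2))).
Proof.
have := den_gt0 t; have := den_gt0 s => hs ht; rewrite /p1 /p2; field; lra.
Qed.

Definition cK (K : nat) : R := 2 / (1 + K%:R ^+ 2) ^+ 2.

Lemma cK_gt0 K : 0 < cK K.
Proof. by rewrite /cK divr_gt0 // exprn_gt0 // den_gt0. Qed.

Lemma p_sep K (s t : nat) : (s < K)%N -> (t < K)%N -> s != t ->
  p1 s%:R * p1 t%:R + p2 s%:R * p2 t%:R - 1 <= - cK K.
Proof.
move=> sK tK st; rewrite p_dot lerN2 /cK.
have hq : 1 <= (s%:R - t%:R : R) ^+ 2.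
  case: (ltngtP s t) st => // h _.
    have : (s.+1 <= t)%N by []. rewrite -(ler_nat R) -addn1 natrD => h'; nra.
  have : (t.+1 <= s)%N by []. rewrite -(ler_nat R) -addn1 natrD => h'; nra.
have hs : (s%:R : R) <= K%:R by rewrite ler_nat ltnW.
have ht : (t%:R : R) <= K%:R by rewrite ler_nat ltnW.
have s0 : (0 : R) <= s%:R by [].
have t0 : (0 : R) <= t%:R by [].
have hD : (1 + s%:R ^+ 2) * (1 + t%:R ^+ 2) <= (1 + K%:R ^+ 2) ^+ 2 :> R.
  rewrite expr2; apply: ler_pM; try (apply: ltW; apply: den_gt0);
  rewrite lerD2l; apply: ler_pM => //.
have D0 : 0 < (1 + s%:R ^+ 2) * (1 + t%:R ^+ 2) :> R by rewrite mulr_gt0 // den_gt0.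
rewrite ler_pdivrMr ?exprn_gt0 ?den_gt0 // mulrAC ler_pdivlMr //.
nra.
Qed.


Definition W2 d K : 'M[R]_(d.+2, K) := \matrix_(l, j)
  (if (l : nat) == 0%N then p1 (j : nat)%:R
   else if (l : nat) == 1%N then p2 (j : nat)%:R else 0).
Definition colk K n (c : 'I_(K * n)) : 'I_K :=
  (enum_val (cast_ord (esym (mxvec_cast K n)) c)).1.
Definition H2 d K n : 'M[R]_(d.+2, K * n) := \matrix_(l, c) W2 d K l (colk c).

Lemma colk_idx K n (k : 'I_K) (i : 'I_n) : colk (mxvec_index k i) = k.
Proof. by rewrite /colk /mxvec_index cast_ordK enum_rankK. Qed.

Lemma hcol_H2 d K n k i : hcol (H2 d K n) k i = col k (W2 d K).
Proof. by apply/colP => l; rewrite !mxE colk_idx. Qed.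

Lemma isOB_W2 d K : isOB (W2 d K).
Proof.
move=> j; rewrite 2!big_ord_recl big1 => [|l _]; rewrite !mxE //=.
by rewrite addr0 p_norm.
by rewrite expr0n.
Qed.

Lemma isOB_H2 d K n : isOB (H2 d K n).
Proof.
move=> c; rewrite -(isOB_W2 d (colk c)); apply: eq_bigr => l _; by rewrite mxE.
Qed.

Lemma z_W2 d K (j k : 'I_K) : ((W2 d K)^T *m col k (W2 d K)) j 0 =
  p1 (j : nat)%:R * p1 (k : nat)%:R + p2 (j : nat)%:R * p2 (k : nat)%:R.
Proof.
rewrite mxE 2!big_ord_recl big1 => [|l _]; rewrite !mxE //=.
by rewrite addr0.
by rewrite mul0r.
Qed.

Lemma SS_W2 d K n tau : 0 < tau -> SS (W2 d K) (H2 d K n) tau <= (n * K)%:R * (K%:R * (tau / cK K)).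
Proof.
move=> tp; apply: SS_le => i k; rewrite hcol_H2.
apply: LCE_le_c => //; first exact: cK_gt0.
move=> j jk; rewrite !z_W2 p_norm.
apply: p_sep => //; exact: ltn_ord.
Qed.

Definition W1 K : 'M[R]_(1, K) := const_mx 1.
Definition H1 K n : 'M[R]_(1, K * n) := const_mx 1.

Lemma isOB_1 m : isOB (const_mx 1 : 'M[R]_(1, m)).
Proof. by move=> j; rewrite big_ord1 mxE expr1n. Qed.

Lemma SS_1 K n tau : 0 < tau -> SS (W1 K) (H1 K n) tau <= (n * K)%:R * K%:R.
Proof.
move=> tp; apply: SS_le => i k; apply: LCE_le_K => // j.
by rewrite !mxE !big_ord1 !mxE.
Qed.

End H.


Theorem mainTheorem11 (R : realType) (d K n : nat) :
  (0 < d)%N -> (2 <= K)%N -> (0 < n)%N ->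
  exists tau0 : R, 0 < tau0 /\
    forall tau : R, 0 < tau -> tau < tau0 ->
      forall (W : 'M[R]_(d, K)) (H : 'M[R]_(d, K * n)),
        isArgminL0 tau W H -> WHminus W H.
Proof.
move=> d0 K2 n0.
have K0 : (0 < K)%N by apply: leq_trans K2.
have NK : (0 : R) < (n * K)%:R * K%:R by rewrite mulr_gt0 // ltr0n ?muln_gt0 ?n0.
case: d d0 => [//|[|d]] _.
- exists (2 / ((n * K)%:R * K%:R)); split; first by rewrite divr_gt0.
  move=> tau tp tlt W H hA; have hA' := hA; case: hA' => oW [oH _].
  split=> //; split=> // i k k' nk; rewrite zdiff leNgt; apply/negP => hv.
  set h := H ord0 (mxvec_index k i).
  have ez : forall j, (W^T *m hcol H k i) j 0 = W ord0 j * h.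
    by move=> j; rewrite !mxE big_ord1 !mxE.
  have pm : forall x : R, x ^+ 2 = 1 -> x = 1 \/ x = -1.
    by move=> x /eqP; rewrite sqrf_eq1 => /orP[] /eqP; [left|right].
  have hW : forall j, W ord0 j = 1 \/ W ord0 j = -1.
    by move=> j; apply: pm; have := oW j; rewrite big_ord1.
  have hh : h = 1 \/ h = -1.
    by apply: pm; have := oH (mxvec_index k i); rewrite big_ord1.
  have g2 : 2 <= (W^T *m hcol H k i) k' 0 - (W^T *m hcol H k i) k 0.
    move: hv; rewrite !ez.
    by case: (hW k') => ->; case: (hW k) => ->; case: hh => ->; lra.
  apply: (@key R 1 K n tau W (W1 R K) H (H1 R K n) i k k' ((n * K)%:R * K%:R)) => //.
  + exact: isOB_1.
  + exact: isOB_1.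
  + exact: SS_1.
  + apply: lt_le_trans (LCE_ge_c nk tp g2).
    rewrite ltr_pdivlMr // mulrC -ltr_pdivlMr //.
- exists (cK R K * ln 2 / ((n * K)%:R * K%:R)); split.
    by rewrite divr_gt0 // mulr_gt0 ?cK_gt0 // ln_gt0 // ltr1n.
  move=> tau tp tlt W H hA; have hA' := hA; case: hA' => oW [oH _].
  split=> //; split=> // i k k' nk; rewrite zdiff leNgt; apply/negP => hv.
  apply: (@key R d.+2 K n tau W (W2 R d K) H (H2 R d K n) i k k'
            ((n * K)%:R * (K%:R * (tau / cK R K)))) => //.
  + exact: isOB_W2.
  + exact: isOB_H2.
  + exact: SS_W2.
  + move: hv; rewrite subr_gt0 => hv; apply: lt_trans (LCE_gt_ln2 nk tp hv).
    have cp := cK_gt0 R K.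
    move: tlt; rewrite ltr_pdivlMr // => tlt.
    have -> : (n * K)%:R * (K%:R * (tau / cK R K)) = (tau * ((n * K)%:R * K%:R)) / cK R K.
      by field; apply: lt0r_neq0.
    by rewrite ltr_pdivrMr // [ln 2 * _]mulrC.
Qed.
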